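(* Let $\mathfrak{B}$ be a finite cyclic group, of order at least $3$, of invertible diagonal $2\times2$ complex matrices, containing three pairwise linearly independent matrices. Let $n\ge3$ and let $F$ be a Boolean function of arity $2n$ such that every function of arity less than $2n$ realizable by a gadget of $\#(\{F\}\cup\mathfrak{B})$ lies in $\lambda\langle\mathfrak{B}\rangle$. Then either $F$ is the zero function, or there exist two distinct variables $x,y$ of $F$ such that both $F^{00}_{xy}$ and $F^{11}_{xy}$ are nonzero functions.
   Context: Matrices in $\mathfrak{B}$ are binary functions $M(u,v)=M_{uv}$. $\#\mathcal{G}$: input a finite multigraph whose vertices carry functions from $\mathcal{G}$ of arity equal to the degree (edges act as binary equality); output the sum over $\{0,1\}$-edge assignments of the product of vertex functions. Gadgets are such networks with dangling edges; realizable functions are their functions. $\langle\mathfrak{B}\rangle$ is the set of functions $x\mapsto\prod_{j=1}^m M_j(x_{\pi(2j-1)},x_{\pi(2j)})$ with $\pi$ a permutation of the $2m$ variables and $M_j\in\mathfrak{B}$; $\lambda\langle\mathfrak{B}\rangle=\{\lambda f:\lambda\in\mathbb{C},f\in\langle\mathfrak{B}\rangle\}$. For variables $x,y$ of $F$ and $a,b\in\{0,1\}$, $F^{ab}_{xy}$ is the arity-$(2n-2)$ function obtained from $F$ by fixing $x=a$, $y=b$. *)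

(* Defs.v *)
From HB Require Import structures.
From mathcomp Require Import all_boot all_order all_algebra.
Set Implicit Arguments. Unset Strict Implicit. Unset Printing Implicit Defensive.
Import Order.TTheory GRing.Theory Num.Theory.
Local Open Scope ring_scope.

Section Defs.
Variable C : numClosedFieldType.

Definition bfunT (I : finType) := {ffun {ffun I -> bool} -> C}.
Definition bfun (k : nat) := bfunT 'I_k.

Definition b2o (b : bool) : 'I_2 := if b then ord_max else ord0.

Definition matfun (M : 'M[C]_2) : bfun 2 :=
  [ffun x : {ffun 'I_2 -> bool} => M (b2o (x ord0)) (b2o (x ord_max))].

(* f \in lambda<B> : f(x) = lam * prod_j M_j(x_{a j}, x_{b j}) where the
   pairs (a j, b j), j < m, list all k variables exactly once
   (i.e. j |-> (pi(2j-1), pi(2j)) for a permutation pi), and M_j \in B. *)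
Definition inLB (B : 'M[C]_2 -> Prop) (k : nat) (f : bfun k) : Prop :=
  exists (lam : C) (m : nat) (a b : 'I_m -> 'I_k) (Ms : 'I_m -> 'M[C]_2),
    (forall j, B (Ms j)) /\
    bijective (fun s : 'I_m + 'I_m =>
                 match s with inl j => a j | inr j => b j end) /\
    forall x : {ffun 'I_k -> bool},
      f x = lam * \prod_(j < m) Ms j (b2o (x (a j))) (b2o (x (b j))).

(* Gadgets of #({F} \cup B), with F of arity 2n.  A vertex is labelled
   None (carrying F, degree 2n) or Some M (carrying M \in B, degree 2). *)
Definition arity (n : nat) (o : option 'M[C]_2) : nat :=
  if o is Some _ then 2 else (2 * n)%N.

Definition vval (n : nat) (F : bfun (2 * n)) (o : option 'M[C]_2) :
  {ffun 'I_(arity n o) -> bool} -> C :=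
  match o as o0 return {ffun 'I_(arity n o0) -> bool} -> C with
  | None => fun y => F y
  | Some M => fun y => matfun M y
  end.

(* f (arity k) is realizable by a gadget: nv vertices with labels lab,
   ne internal edges and k (ordered) dangling edges; the wiring w sends each
   incidence slot (v, i), i < deg v, to the edge occupying it; every internal
   edge occupies exactly 2 slots (loops/multi-edges allowed) and every
   dangling edge exactly one. *)
Definition realizable (B : 'M[C]_2 -> Prop) (n : nat) (F : bfun (2 * n))
  (k : nat) (f : bfun k) : Prop :=
  exists (nv ne : nat) (lab : 'I_nv -> option 'M[C]_2)
    (w : {v : 'I_nv & 'I_(arity n (lab v))} -> 'I_ne + 'I_k),
    (forall v M, lab v = Some M -> B M) /\
    (forall e : 'I_ne, #|[pred s | w s == inl e]| = 2%N) /\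
    (forall d : 'I_k, #|[pred s | w s == inr d]| = 1%N) /\
    forall x : {ffun 'I_k -> bool},
      f x = \sum_(sg : {ffun 'I_ne -> bool})
              \prod_(v : 'I_nv)
                 @vval n F (lab v)
                   [ffun i : 'I_(arity n (lab v)) =>
                      match w (@Tagged _ v (fun v => 'I_(arity n (lab v))) i) with
                      | inl e => sg e
                      | inr d => x d
                      end].

(* F^{ab}_{xy}: fix x = a, y = b; the remaining variables are those i with
   i != x and i != y (there are k - 2 of them when x != y). *)
Definition pin (k : nat) (F : bfun k) (x y : 'I_k) (a b : bool) :
  bfunT {i : 'I_k | (i != x) && (i != y)} :=
  [ffun z : {ffun {i : 'I_k | (i != x) && (i != y)} -> bool} => F [ffun i : 'I_k =>
                  match insub i : option {i : 'I_k | (i != x) && (i != y)} with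
                  | Some j => z j
                  | None => if i == x then a else b
                  end]].

Definition diag_cyclic_group (B : 'M[C]_2 -> Prop) (m : nat) : Prop :=
  exists g : 'M[C]_2,
    is_diag_mx g /\ g \in unitmx /\
    (0 < m)%N /\ g ^+ m = 1 /\ (forall j, (0 < j < m)%N -> g ^+ j != 1) /\
    (forall M, B M <-> exists j, M = g ^+ j).

Definition lin_indep2 (M1 M2 : 'M[C]_2) : Prop :=
  forall a b : C, a *: M1 + b *: M2 = 0 -> a = 0 /\ b = 0.

End Defs.

(* Main.v *)
Require Import Defs.
From HB Require Import structures.
From mathcomp Require Import all_boot all_order all_algebra.
Import Order.TTheory GRing.Theory Num.Theory.
Local Open Scope ring_scope.

Lemma diag_pow_entry (C : numClosedFieldType) (g : 'M[C]_2) :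
  is_diag_mx g -> g \in unitmx -> forall (j : nat) (i : 'I_2), (g ^+ j) i i != 0.
Proof.
move=> /diag_mxP [d ->] Hu.
have Hd : forall i, d 0 i != 0.
  move: Hu; rewrite unitmxE det_diag unitfE => /prodf_neq0 H i.
  exact: H.
have Hp : forall j, (diag_mx d) ^+ j = diag_mx (\row_i d 0 i ^+ j).
  elim=> [|j IH].
    rewrite expr0; apply/matrixP => a b; by rewrite !mxE expr0.
  rewrite (@exprS _ (diag_mx d) j) IH -mulmxE mul_diag_mx; apply/matrixP => a b; rewrite !mxE.
  by case: eqP => _; rewrite ?mulr0n ?mulr1n ?exprS ?mulr0.
move=> j i; rewrite Hp !mxE eqxx mulr1n; exact: expf_neq0.
Qed.
Section Gadget.
Variables (C : numClosedFieldType) (B : 'M[C]_2 -> Prop) (n : nat) (F : bfun C (2 * n)).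
Variables (x y : 'I_(2 * n)).
Hypothesis xy : x != y.

Let T := {i : 'I_(2 * n) | (i != x) && (i != y)}.
Let k := #|{: T}|.

Definition lab1 : 'I_1 -> option 'M[C]_2 := fun _ => None.

Definition w1 (s : {v : 'I_1 & 'I_(arity n (lab1 v))}) : 'I_1 + 'I_k :=
  match insub (tagged s : 'I_(2 * n)) : option T with
  | Some j => inr (enum_rank j)
  | None => inl ord0
  end.

Definition f1 : bfun C k := [ffun z : {ffun 'I_k -> bool} =>
  \sum_(sg : {ffun 'I_1 -> bool})
              \prod_(v : 'I_1)
                 @vval C n F (lab1 v)
                   [ffun i : 'I_(arity n (lab1 v)) =>
                      match w1 (@Tagged _ v (fun v => 'I_(arity n (lab1 v))) i) with
                      | inl e => sg e
                      | inr d => z d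
                      end]].

Definition ext (z : {ffun 'I_k -> bool}) (c : bool) : {ffun 'I_(2 * n) -> bool} :=
  [ffun i => match insub i : option T with Some j => z (enum_rank j) | None => c end].

Lemma f1E z : f1 z = F (ext z true) + F (ext z false).
Proof.
rewrite ffunE.
rewrite (reindex (fun b : bool => [ffun _ : 'I_1 => b])); last first.
  apply: onW_bij; exists (fun sg : {ffun 'I_1 -> bool} => sg ord0).
    by move=> b; rewrite ffunE.
  by move=> sg; apply/ffunP => i; rewrite ffunE (ord1 i).
rewrite big_bool /= !big_ord1 /=.
congr (F _ + F _); apply/ffunP => i; rewrite !ffunE /w1 /=;
  by case: (insub i) => [j|] //; rewrite ffunE.
Qed.

Let phi (i : 'I_(2 * n)) : {v : 'I_1 & 'I_(arity n (lab1 v))} :=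
  @Tagged _ ord0 (fun v => 'I_(arity n (lab1 v))) i.

Lemma card_w1 (P : pred _) :
  #|[pred s | P (w1 s)]| = #|[pred i | P (w1 (phi i))]|.
Proof.
rewrite -!sum1_card (reindex phi) //.
apply: onW_bij; exists (fun s => (tagged s : 'I_(2 * n))) => //.
by case=> v i; rewrite /phi (ord1 v).
Qed.

Lemma real1 : realizable B F f1.
Proof.
exists 1%N, 1%N, lab1, w1; split; first by [].
split.
  move=> e; rewrite (card_w1 (fun t => t == inl e)).
  have -> : #|[pred i | w1 (phi i) == inl e]| = #|pred2 x y|; last by rewrite card2 xy.
  apply: eq_card => i /=; rewrite /w1 /= (ord1 e) inE.
  case: insubP => [j Hj _|]; first by move: Hj; rewrite !inE => /andP[/negPf -> /negPf ->].
  by rewrite !inE negb_and !negbK eqxx.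
split.
  move=> d; rewrite (card_w1 (fun t => t == inr d)).
  have -> : #|[pred i | w1 (phi i) == inr d]| = #|pred1 (val (enum_val d))|; last by rewrite card1.
  apply: eq_card => i /=; rewrite /w1 /= inE.
  case: insubP => [j Hj <-|].
    by apply/eqP/eqP => [[<-]|/val_inj ->]; rewrite ?enum_rankK ?enum_valK.
  move=> Hi; rewrite !inE; apply/esym/negbTE/eqP => Ei; move: Hi; rewrite Ei.
  by rewrite (valP (enum_val d)).
by move=> z; rewrite ffunE.
Qed.


Lemma k_lt : (k < 2 * n)%N.
Proof.
rewrite /k card_sig -[X in (_ < X)%N](card_ord (2 * n)).
apply: proper_card; apply/properP; split; first by apply/subsetP.
by exists x => //; rewrite !inE eqxx.
Qed.

Hypothesis Hdiag : forall M, B M -> forall c, M (b2o c) (b2o c) != 0.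
Hypothesis Hreal : forall (k : nat) (f : bfun C k), (k < 2 * n)%N ->
     realizable B F f -> inLB B f.
Variables u v : 'I_(2 * n).
Hypotheses (uv : u != v) (ux : u != x) (uy : u != y) (vx : v != x) (vy : v != y).

Lemma pin_eval (Q : {ffun 'I_(2 * n) -> bool}) d :
  Q u = d -> Q v = d ->
  pin F u v d d [ffun j : {i : 'I_(2 * n) | (i != u) && (i != v)} => Q (val j)] = F Q.
Proof.
move=> Qu Qv; rewrite /pin ffunE; congr (F _); apply/ffunP => i; rewrite ffunE.
case: insubP => [j _ <-|]; first by rewrite ffunE.
rewrite negb_and !negbK if_same => /orP[]/eqP -> //.
Qed.

Lemma ext_const d c' q : q != x -> q != y -> ext [ffun _ => d] c' q = d.
Proof.
move=> qx qy; rewrite ffunE; case: insubP => [j _ _|]; first by rewrite ffunE.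
by rewrite qx qy.
Qed.

Lemma key (s : {ffun 'I_(2 * n) -> bool}) : F s != 0 -> s x = s y ->
  exists x y : 'I_(2 * n), x != y /\ pin F x y false false <> 0 /\ pin F x y true true <> 0.
Proof.
move=> Fs sxy.
case: (boolP ((pin F x y false false != 0) && (pin F x y true true != 0))) => [/andP[h1 h2] | H].
  by exists x, y; split => //; split; apply/eqP.
have [c Hc] : exists c, pin F x y c c = 0.
  by move: H; rewrite negb_and !negbK => /orP[]/eqP H; [exists false|exists true].
have Hz : forall z, F (ext z c) = 0.
  have E t : pin F x y c c t = 0 by rewrite Hc ffunE.
  move=> z; have := E [ffun j => z (enum_rank j)].
  rewrite /pin !ffunE => <-; congr (F _); apply/ffunP => i; rewrite !ffunE.
  by case: insub => [j|]; rewrite ?ffunE ?if_same.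
have f1ext : forall z, f1 z = F (ext z (~~ c)).
  by move=> z; rewrite f1E; case: c Hc Hz => _ Hz; rewrite Hz ?addr0 ?add0r.
pose zs := [ffun d : 'I_k => s (val (enum_val d))].
have Hs : ext zs (s x) = s.
  apply/ffunP => i; rewrite !ffunE; case: insubP => [j _ <-|]; first by rewrite ffunE enum_rankK.
  by rewrite negb_and !negbK => /orP[]/eqP ->.
have bs : s x = ~~ c.
  case: (s x =P ~~ c) => // ne; exfalso; move/eqP: Fs; apply.
  have e : s x = c by move: ne; case: (s x); case: (c).
  by rewrite -Hs e Hz.
have [lam [m [a [b [Ms [HB [_ Hf]]]]]]] := Hreal _ _ k_lt real1.
have lam0 : lam != 0.
  apply: contra Fs => /eqP l0; rewrite -Hs bs -f1ext Hf l0 mul0r.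
  by [].
have Hd : forall d, F (ext [ffun _ => d] (~~ c)) != 0.
  move=> d; rewrite -f1ext Hf mulf_neq0 //; apply/prodf_neq0 => j _; rewrite !ffunE.
  exact: Hdiag.
exists u, v; split => //; split => Hp.
  have E t : pin F u v false false t = 0 by rewrite Hp ffunE.
  have := E [ffun j => ext [ffun _ => false] (~~ c) (val j)].
  rewrite pin_eval ?ext_const // => E'; move: (Hd false); by rewrite E' eqxx.
have E t : pin F u v true true t = 0 by rewrite Hp ffunE.
have := E [ffun j => ext [ffun _ => true] (~~ c) (val j)].
rewrite pin_eval ?ext_const // => E'; move: (Hd true); by rewrite E' eqxx.
Qed.

End Gadget.


Theorem mainTheorem13 (C : numClosedFieldType) (B : 'M[C]_2 -> Prop)
  (n : nat) (F : bfun C (2 * n)) :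
  (exists m : nat, (3 <= m)%N /\ diag_cyclic_group B m) ->
  (exists M1 M2 M3 : 'M[C]_2, [/\ B M1, B M2 & B M3] /\
     [/\ lin_indep2 M1 M2, lin_indep2 M1 M3 & lin_indep2 M2 M3]) ->
  (3 <= n)%N ->
  (forall (k : nat) (f : bfun C k), (k < 2 * n)%N ->
     realizable B F f -> inLB B f) ->
  F = 0 \/
  exists x y : 'I_(2 * n), x != y /\
    pin F x y false false <> 0 /\ pin F x y true true <> 0.
Proof.
move=> [m [_ [g [gd [gu [_ [_ [_ HBg]]]]]]]] _ n3 Hreal.
have Hdiag : forall M, B M -> forall c, M (b2o c) (b2o c) != 0.
  by move=> M /HBg [j ->] c; apply: diag_pow_entry.
case: (F =P 0) => [->|/eqP F0]; [by left | right].
have [s Fs] : exists s, F s != 0.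
  case: (pickP (fun s => F s != 0)) => [s Hs|H]; first by exists s.
  by case/eqP: F0; apply/ffunP => s; rewrite ffunE; move: (H s) => /negbFE/eqP.
have lt i : (i < 5)%N -> (i < 2 * n)%N.
  by move=> H; apply: (leq_trans H); apply: (leq_trans _ (leq_mul (leqnn 2) n3)).
pose i0 := Ordinal (lt 0%N isT); pose i1 := Ordinal (lt 1%N isT).
pose i2 := Ordinal (lt 2%N isT); pose i3 := Ordinal (lt 3%N isT).
pose i4 := Ordinal (lt 4%N isT).
have : (s i0 == s i1) || (s i0 == s i2) || (s i1 == s i2).
  by case: (s i0); case: (s i1); case: (s i2).
case/orP => [/orP[]|] /eqP E.
- exact: (@key C B n F i0 i1 isT Hdiag Hreal i3 i4 isT isT isT isT isT s Fs E).
- exact: (@key C B n F i0 i2 isT Hdiag Hreal i3 i4 isT isT isT isT isT s Fs E).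
- exact: (@key C B n F i1 i2 isT Hdiag Hreal i3 i4 isT isT isT isT isT s Fs E).
Qed.
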